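(* Let $A=(\Sigma,q,N,\delta)$ be a partitioned LQCA with local transition matrix $Q$. Then the following are equivalent: (1) $Q$ is unitary; (2) $A$ is well-formed; (3) the time evolution operator $U_A$ is unitary.
   Context: A linear quantum cellular automaton (LQCA) is a tuple $A=(\Sigma,q,N,\delta)$ where $\Sigma$ is a finite nonempty set of states, $N=(a_1,\dots,a_r)$ is a strictly increasing sequence of integers, $\delta:\Sigma^r\to\mathbb C^\Sigma$ satisfies $\|\delta(w)\|>0$ for all $w$, and $q\in\Sigma$ satisfies $[\delta(q,\dots,q)](x)=1$ if $x=q$ and $0$ otherwise. A configuration is a map $c:\mathbb Z\to\Sigma$ with $c_i\ne q$ for only finitely many $i$; $\mathcal C_A$ is the set of configurations. With $c_{i+N}=(c_{i+a_1},\dots,c_{i+a_r})$, the time evolution operator is $U_A(d,c)=\prod_{i\in\mathbb Z}[\delta(c_{i+N})](d_i)$, viewed as the linear operator on $\ell_2(\mathcal C_A)$ sending $u$ to $d\mapsto\sum_cU_A(d,c)u(c)$. $A$ is well-formed if $U_A$ preserves the $\ell_2$ norm; $U_A$ is unitary if it is norm preserving and bijective. An LQCA is partitioned (PLQCA) if $\Sigma=\Sigma_1\times\cdots\times\Sigma_r$ for finite nonempty sets $\Sigma_j$, and $\delta=\delta_Q\circ\delta_p$ where $\delta_p:\Sigma^r\to\Sigma$ is $\delta_p((x_{1,1},\dots,x_{1,r}),\dots,(x_{r,1},\dots,x_{r,r}))=(x_{1,1},x_{2,2},\dots,x_{r,r})$ and $\delta_Q:\Sigma\to\mathbb C^\Sigma$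 is arbitrary (subject to $\delta$ making $A$ an LQCA). The local transition matrix is the $\Sigma\times\Sigma$ complex matrix $Q(y,x)=[\delta_Q(x)](y)$. *)

(* Defs.v *)
From mathcomp Require Import all_boot all_order all_algebra.
From mathcomp Require Import reals.
From mathcomp.real_closed Require Import complex.
From Stdlib Require List.

Set Implicit Arguments.
Unset Strict Implicit.
Unset Printing Implicit Defensive.

Import Order.TTheory GRing.Theory Num.Theory.
Local Open Scope ring_scope.

(* Finite sets are
   duplicate-free lists. *)
Definition HasSum (R : realType) (T : Type) (f : T -> R[i]) (s : R[i]) : Prop :=
  forall eps : R, 0 < eps ->
    exists F0 : seq T, forall F : seq T,
      List.NoDup F -> List.incl F0 F ->
      `|\sum_(x <- F) f x - s| < (eps%:C)%C.

Definition window (M : nat) : seq int :=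
  [seq (k%:Z - M%:Z)%R | k <- iota 0 (M.*2.+1)].

(* [IsProdZ g z]: the product over all i in Z of g i equals z, for a family
   g that is eventually 1 (the symmetric partial products are eventually
   constant equal to z). *)
Definition IsProdZ (R : realType) (g : int -> R[i]) (z : R[i]) : Prop :=
  exists M : nat, forall M' : nat, (M <= M')%N ->
    \prod_(i <- window M') g i = z.

Section PLQCA.

Variable R : realType.
Variable r : nat.
Variable Sig : 'I_r -> finType.

Definition State : finType := {dffun forall j : 'I_r, Sig j}.

(* the neighbourhood N = (a_1, ..., a_r) *)
Variable a : 'I_r -> int.
Variable q : State.
(* local transition matrix Q(y, x) = [delta_Q(x)](y) *)
Variable Q : State -> State -> R[i].

Definition delta_p (w : 'I_r -> State) : State := [ffun j => w j j].

Definition delta (w : 'I_r -> State) (y : State) : R[i] := Q y (delta_p w).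

Definition strictly_increasing : Prop :=
  forall i j : 'I_r, (i < j)%N -> a i < a j.

Definition is_PLQCA : Prop :=
  strictly_increasing /\
  (forall w : 'I_r -> State, 0 < \sum_(y : State) `|delta w y| ^+ 2) /\
  (forall y : State, delta (fun _ => q) y = (y == q)%:R).

Definition Config : Type :=
  {c : int -> State | exists n : nat, forall i : int, (n < `|i|)%N -> c i = q}.

Definition cfg (c : Config) : int -> State := proj1_sig c.

Definition nbh (c : Config) (i : int) : 'I_r -> State := fun j => cfg c (i + a j).

Definition Ucoef (d c : Config) (z : R[i]) : Prop :=
  IsProdZ (fun i => delta (nbh c i) (cfg d i)) z.

Definition l2norm2 (u : Config -> R[i]) (s : R[i]) : Prop :=
  HasSum (fun c => `|u c| ^+ 2) s.

Definition in_l2 (u : Config -> R[i]) : Prop := exists s, l2norm2 u s.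

Definition Uapp (u v : Config -> R[i]) : Prop :=
  forall d : Config, exists w : Config -> R[i],
    (forall c, Ucoef d c (w c)) /\ HasSum (fun c => w c * u c) (v d).

Definition well_formed : Prop :=
  forall (u : Config -> R[i]) (s : R[i]), l2norm2 u s ->
    exists v, Uapp u v /\ l2norm2 v s.

Definition U_unitary : Prop :=
  well_formed /\
  (forall u1 u2 v, in_l2 u1 -> in_l2 u2 -> Uapp u1 v -> Uapp u2 v -> u1 = u2) /\
  (forall v, in_l2 v -> exists u, in_l2 u /\ Uapp u v).

Definition Qmx : 'M[R[i]]_#|State| :=
  \matrix_(i, j) Q (enum_val i) (enum_val j).

End PLQCA.

(* Main.v *)
From HB Require Import structures.
From mathcomp Require Import all_boot all_order all_algebra zify ring lra.
From mathcomp Require Import reals.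
From mathcomp.real_closed Require Import complex.
From Stdlib Require Import ProofIrrelevance FunctionalExtensionality ClassicalEpsilon.
Require Import Defs.
Set Implicit Arguments. Unset Strict Implicit. Unset Printing Implicit Defensive.
Local Open Scope ring_scope.
Import Order.TTheory GRing.Theory Num.Theory.


Section Sums.
Variable R : realType.
Local Notation C := R[i].

Lemma ltc0 (e : R) : (0 < (e%:C)%C :> C) = (0 < e).
Proof. by rewrite ltcE /= eqxx. Qed.

Lemma realC (e : R) : (e%:C)%C \is Num.real.
Proof. by apply/complex_realP; exists e. Qed.

Variable T : eqType.

Lemma In_mem (x : T) s : List.In x s <-> x \in s.
Proof.
elim: s => //= y s IH; rewrite inE; split.
  by case=> [->|/IH ->]; rewrite ?eqxx ?orbT.
by case/orP=> [/eqP->|/IH]; auto.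
Qed.

Lemma NoDup_uniq (F : seq T) : List.NoDup F -> uniq F.
Proof.
elim=> //= x s Hn _ ->; rewrite andbT; apply/negP => /In_mem; exact: Hn.
Qed.

Lemma uniq_NoDup (F : seq T) : uniq F -> List.NoDup F.
Proof.
elim: F => [|x s IH] /=; first by constructor.
case/andP=> nx us; constructor; last exact: IH.
by move/In_mem; apply/negP.
Qed.

Lemma incl_sub (F G : seq T) : {subset F <= G} -> List.incl F G.
Proof. by move=> h x /In_mem /h /In_mem. Qed.

Lemma sub_incl (F G : seq T) : List.incl F G -> {subset F <= G}.
Proof. by move=> h x /In_mem /h /In_mem. Qed.

Lemma sum_sub (f : T -> C) (L F : seq T) : uniq L -> uniq F -> {subset L <= F} ->
  \sum_(x <- F) f x = \sum_(x <- L) f x + \sum_(x <- F | x \notin L) f x.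
Proof.
move=> uL uF sLF; rewrite (bigID (fun x => x \in L)) /=; congr (_ + _).
rewrite -big_filter; apply: perm_big; apply: uniq_perm.
- exact: filter_uniq.
- exact: uL.
move=> x; rewrite mem_filter; case xL: (x \in L) => //=; exact: sLF.
Qed.

Lemma HasSum_fin (f : T -> C) (L : seq T) : uniq L ->
  (forall x, x \notin L -> f x = 0) -> HasSum f (\sum_(x <- L) f x).
Proof.
move=> uL h0 eps he; exists L => F /NoDup_uniq uF /sub_incl sLF.
rewrite (sum_sub f uL uF sLF) [\sum_(x <- F | _) _]big1 ?addr0 ?subrr ?normr0 ?ltc0 //; move=> x; exact: h0.
Qed.

Lemma HasSum_uniq (f : T -> C) s1 s2 : HasSum f s1 -> HasSum f s2 -> s1 = s2.
Proof.
move=> h1 h2; apply/eqP; rewrite -subr_eq0; apply/negP => nz.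
set n : R := complex.Re `|s1 - s2|.
have En : `|s1 - s2| = (n%:C)%C by rewrite /n RRe_real ?normr_real.
have n0 : 0 < n by rewrite -ltc0 -En normr_gt0; apply/negP.
have n20 : 0 < n / 2 by rewrite divr_gt0.
have [F1 H1] := h1 _ n20; have [F2 H2] := h2 _ n20.
set F := undup (F1 ++ F2).
have uF : List.NoDup F by apply: uniq_NoDup; exact: undup_uniq.
have s1F : {subset F1 <= F} by move=> x hx; rewrite mem_undup mem_cat hx.
have s2F : {subset F2 <= F} by move=> x hx; rewrite mem_undup mem_cat hx orbT.
have H1' := H1 F uF (incl_sub s1F).
have H2' := H2 F uF (incl_sub s2F).
set S := \sum_(x <- F) f x in H1' H2'.
have : `|s1 - s2| < ((n / 2)%:C + (n / 2)%:C)%C.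
  have -> : s1 - s2 = (S - s2) - (S - s1) by ring.
  exact: (le_lt_trans (ler_normB _ _) (ltrD H2' H1')).
by rewrite -rmorphD /= -splitr En ltxx.
Qed.


Lemma HasSum_ext (f g : T -> C) s : (forall x, f x = g x) -> HasSum f s -> HasSum g s.
Proof.
move=> fg h eps he; have [F0 H] := h eps he; exists F0 => F uF iF.
rewrite -(eq_bigr _ (fun x _ => fg x)); exact: H.
Qed.

Lemma HasSum_conj (f : T -> C) s : HasSum f s -> HasSum (fun x => (f x)^*) s^*.
Proof.
move=> h eps he; have [F0 H] := h eps he; exists F0 => F uF iF.
by rewrite -rmorph_sum -rmorphB norm_conjC; exact: H.
Qed.

Lemma HasSum_real (f : T -> C) s : (forall x, 0 <= f x) -> HasSum f s ->
  s \is Num.real.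
Proof.
move=> f0 h; rewrite CrealE; apply/eqP; apply: (HasSum_uniq (HasSum_conj h)).
by apply: HasSum_ext h => x; rewrite geC0_conj.
Qed.

Lemma sum_le_sub (f : T -> C) (L F : seq T) : (forall x, 0 <= f x) ->
  uniq L -> uniq F -> {subset L <= F} ->
  \sum_(x <- L) f x <= \sum_(x <- F) f x.
Proof.
move=> f0 uL uF sLF; rewrite (sum_sub f uL uF sLF) lerDl; exact: sumr_ge0.
Qed.

Lemma sum_real (f : T -> C) (L : seq T) : (forall x, 0 <= f x) ->
  \sum_(x <- L) f x \is Num.real.
Proof. by move=> f0; apply: ger0_real; exact: sumr_ge0. Qed.

Lemma window_exists (A : nat -> seq T) (F : seq T) :
  (forall N M, (N <= M)%N -> {subset A N <= A M}) ->
  (forall x, exists N, x \in A N) -> exists N, {subset F <= A N}.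
Proof.
move=> mon ex; elim: F => [|x F [N HN]]; first by exists 0%N.
have [M HM] := ex x; exists (maxn N M) => y; rewrite inE => /orP[/eqP->|/HN].
  by apply: (mon M); rewrite ?leq_maxr.
by apply: mon; rewrite leq_maxl.
Qed.

End Sums.

Lemma sandwichC (R : realType) (a x b s : R[i]) (e : R) :
  a \is Num.real -> b \is Num.real -> x \is Num.real -> s \is Num.real ->
  a <= x -> x <= b -> `|a - s| < (e%:C)%C -> `|b - s| < (e%:C)%C ->
  `|x - s| < (e%:C)%C.
Proof.
move=> ra rb rx rs ax xb.
rewrite !real_ltr_distl ?rpredB // => /andP[h1 h2] /andP[h3 h4].
apply/andP; split; first exact: lt_le_trans h1 ax.
exact: le_lt_trans xb h4.
Qed.

Lemma HasSum_windows (R : realType) (T T' : eqType) (f : T -> R[i]) (g : T' -> R[i])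
  (s : R[i]) (A : nat -> seq T) (B : nat -> seq T') :
  (forall x, 0 <= f x) -> (forall y, 0 <= g y) ->
  (forall N, uniq (A N)) -> (forall N, uniq (B N)) ->
  (forall N M, (N <= M)%N -> {subset A N <= A M}) ->
  (forall N M, (N <= M)%N -> {subset B N <= B M}) ->
  (forall x, exists N, x \in A N) -> (forall y, exists N, y \in B N) ->
  (forall N, \sum_(x <- A N) f x = \sum_(y <- B N) g y) ->
  HasSum g s -> HasSum f s.
Proof.
move=> f0 g0 uA uB mA mB eA eB eqAB hg eps he.
have rs := HasSum_real g0 hg.
have [F0 H0] := hg eps he.
have [N HN] := window_exists F0 mB eB.
exists (A N) => F /NoDup_uniq uF /sub_incl sAF.
have [N1 HN1] := window_exists F mA eA.
set N' := maxn N N1.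
have sFA : {subset F <= A N'} by move=> x /HN1; apply: mA; rewrite leq_maxr.
have hb : `|\sum_(y <- B N') g y - s| < (eps%:C)%C.
  apply: H0; first exact: uniq_NoDup.
  by apply: incl_sub => y /HN; apply: mB; rewrite leq_maxl.
have ha : `|\sum_(y <- B N) g y - s| < (eps%:C)%C.
  by apply: H0; [exact: uniq_NoDup | exact: incl_sub].
rewrite -!eqAB in ha hb.
apply: (sandwichC _ _ _ rs _ _ ha hb); rewrite ?sum_real //.
- exact: sum_le_sub.
- exact: sum_le_sub.
Qed.


Section FinAlg.
Variable R : realType.
Local Notation C := R[i].
Variables T T' : eqType.

Lemma sum_delta (U : eqType) (B : seq U) (F : U -> C) b : uniq B -> b \in B ->
  \sum_(b' <- B) F b' * (b == b')%:R = F b.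
Proof.
move=> uB bB; rewrite (bigD1_seq b) //= eqxx mulr1 big1 ?addr0 //.
by move=> b' nb; rewrite eq_sym (negbTE nb) mulr0.
Qed.

Lemma iso_fin (K : T -> T' -> C) (A : seq T) (B : seq T') (w : T' -> C) :
  uniq A -> uniq B ->
  (forall b b', b \in B -> b' \in B -> \sum_(x <- A) K x b * (K x b')^* = (b == b')%:R) ->
  \sum_(x <- A) `|\sum_(b <- B) K x b * w b| ^+ 2 = \sum_(b <- B) `|w b| ^+ 2.
Proof.
move=> uA uB orth.
under eq_bigr => x _ do rewrite normCK rmorph_sum big_distrl /=.
under eq_bigr => x _ do under eq_bigr => b _ do rewrite big_distrr /=.
rewrite exchange_big /=; apply: eq_big_seq => b bB.
rewrite exchange_big /= normCK.
transitivity (\sum_(b' <- B) w b * (w b')^* * (b == b')%:R).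
  apply: eq_big_seq => b' b'B; rewrite -(orth b b') // big_distrr /=.
  apply: eq_bigr => x _; rewrite rmorphM /=; ring.
by rewrite sum_delta.
Qed.

Lemma inv_fin (L : T -> T' -> C) (M : T' -> T -> C) (A : seq T) (B : seq T') (w : T -> C) :
  uniq A ->
  (forall x x', x \in A -> x' \in A -> \sum_(b <- B) L x b * M b x' = (x == x')%:R) ->
  forall x, x \in A ->
  \sum_(b <- B) L x b * (\sum_(x' <- A) M b x' * w x') = w x.
Proof.
move=> uA orth x xA.
under eq_bigr => b _ do rewrite big_distrr /=.
rewrite exchange_big /=.
transitivity (\sum_(x' <- A) w x' * (x == x')%:R); last by rewrite sum_delta.
apply: eq_big_seq => x' x'A; rewrite -(orth x x') // big_distrr /=.
by apply: eq_bigr => b _; ring.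
Qed.

End FinAlg.


Section Cfg.
Variable r : nat.
Variable Sig : 'I_r -> finType.
Variable q : State Sig.
Local Notation St := (State Sig).
Local Notation CF := (Config q).

Lemma cfg_inj (c d : CF) : cfg c = cfg d -> c = d.
Proof.
case: c d => [c pc] [d pd] /= e; subst; congr exist; apply: proof_irrelevance.
Qed.

Definition cfg_eqb (c d : CF) : bool :=
  if excluded_middle_informative (c = d) then true else false.

Lemma cfg_eqP : Equality.axiom cfg_eqb.
Proof.
move=> c d; rewrite /cfg_eqb; case: excluded_middle_informative => h.
  by left. by right.
Qed.

HB.instance Definition _ := hasDecEq.Build CF cfg_eqP.

Definition bnd (c : CF) : nat :=
  proj1_sig (constructive_indefinite_description _ (proj2_sig c)).

Lemma bndP (c : CF) i : (bnd c < `|i|)%N -> cfg c i = q.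
Proof.
rewrite /bnd; case: constructive_indefinite_description => n hn /=; exact: hn.
Qed.

Definition supp N (f : int -> St) := forall i, (N < `|i|)%N -> f i = q.

Definition posN N (i : int) : 'I_(N.*2.+1) := inord (absz (i + N%:Z)%R).

Lemma posN_val N i : (`|i| <= N)%N -> (nat_of_ord (posN N i) = absz (i + N%:Z)%R)%N.
Proof. move=> h; rewrite /posN inordK //; lia. Qed.

Definition extf N (f : {ffun 'I_(N.*2.+1) -> St}) : int -> St :=
  fun i => if (`|i| <= N)%N then f (posN N i) else q.
Arguments extf : clear implicits.

Lemma extP N f : exists n, forall i, (n < `|i|)%N -> extf N f i = q.
Proof. by exists N => i h; rewrite /extf leqNgt h. Qed.
Arguments extP : clear implicits.

Definition ext N f : CF := exist _ (extf N f) (extP N f).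
Arguments ext : clear implicits.

Definition SW N : seq CF := map (ext N) (enum {ffun 'I_(N.*2.+1) -> St}).

Lemma ext_at N f (k : 'I_(N.*2.+1)) : cfg (ext N f) (k%:Z - N%:Z) = f k.
Proof.
have hk := ltn_ord k.
rewrite /= /extf ifT; last by lia.
congr (f _); apply: val_inj => /=; rewrite posN_val; lia.
Qed.

Lemma ext_supp N f : supp N (cfg (ext N f)).
Proof. by move=> i h; rewrite /= /extf leqNgt h. Qed.

Lemma ext_inj N : injective (ext N).
Proof.
move=> f g e; apply/ffunP => k; by rewrite -!ext_at e.
Qed.

Lemma SW_uniq N : uniq (SW N).
Proof. rewrite map_inj_uniq ?enum_uniq //; exact: ext_inj. Qed.

Lemma memSW1 N d : d \in SW N -> supp N (cfg d).
Proof. by case/mapP => f _ ->; exact: ext_supp. Qed.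

Lemma memSW2 N d : supp N (cfg d) -> d \in SW N.
Proof.
move=> h; apply/mapP; exists [ffun k : 'I_(N.*2.+1) => cfg d (k%:Z - N%:Z)].
  by rewrite mem_enum.
apply: cfg_inj; apply: functional_extensionality => i /=; rewrite /extf.
case: ifP => hi; last by rewrite h //; lia.
rewrite ffunE posN_val //; congr (cfg d _); lia.
Qed.

Lemma supp_mono N M f : (N <= M)%N -> supp N f -> supp M f.
Proof. move=> h hs i hi; apply: hs; lia. Qed.

Lemma SW_mono N M : (N <= M)%N -> {subset SW N <= SW M}.
Proof. by move=> h d /memSW1 /(supp_mono h) /memSW2. Qed.

Lemma SW_exh d : exists N, d \in SW N.
Proof. by exists (bnd d); apply: memSW2 => i; exact: bndP. Qed.

End Cfg.
Arguments SW {r Sig q} N.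
Arguments ext {r Sig q} N f.
Arguments bnd {r Sig q} c.
Arguments supp {r Sig} q N f.

Section Pi.
Variable r : nat.
Variable Sig : 'I_r -> finType.
Variable q : State Sig.
Variable a : 'I_r -> int.
Local Notation St := (State Sig).
Local Notation CF := (Config q).

Definition Ma : nat := (\max_(j < r) `|a j|)%N.

Lemma aMa j : (`|a j| <= Ma)%N.
Proof. exact: (leq_bigmax (F := fun j => `|a j|%N)). Qed.

Definition shf (s : int) (c : CF) : int -> St :=
  fun i => [ffun j => cfg c (i + (if s == 1 then a j else - a j))%R j].

Lemma shfP s c : exists n, forall i, (n < `|i|)%N -> shf s c i = q.
Proof.
exists (bnd c + Ma)%N => i hi; apply/ffunP => j; rewrite ffunE bndP //.
have := aMa j; case: (s == 1) => h; lia.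
Qed.

Definition sh s c : CF := exist _ (shf s c) (shfP s c).
Definition pi := sh 1.
Definition piinv := sh (-1).

Lemma pi_at c i : cfg (pi c) i = [ffun j => cfg c (i + a j)%R j].
Proof. by []. Qed.

Lemma pi_inv : cancel piinv pi.
Proof.
move=> x; apply: cfg_inj; apply: functional_extensionality => i /=.
apply/ffunP => j; rewrite /shf /= !ffunE /=; by rewrite ?addrK ?subrK.
Qed.

Lemma inv_pi : cancel pi piinv.
Proof.
move=> x; apply: cfg_inj; apply: functional_extensionality => i /=.
apply/ffunP => j; rewrite /shf /= !ffunE /=; by rewrite ?addrK ?subrK.
Qed.

Definition PW N : seq CF := map piinv (SW N).

Lemma PW_uniq N : uniq (PW N).
Proof. rewrite map_inj_uniq ?SW_uniq //; exact: can_inj pi_inv. Qed.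

Lemma memPW N c : (c \in PW N) = (pi c \in SW N).
Proof.
apply/mapP/idP => [[x xS ->]|h]; first by rewrite pi_inv.
by exists (pi c); rewrite ?inv_pi.
Qed.

Lemma PW_mono N M : (N <= M)%N -> {subset PW N <= PW M}.
Proof. by move=> h c; rewrite !memPW; apply: SW_mono. Qed.

Lemma PW_exh c : exists N, c \in PW N.
Proof. by have [N h] := SW_exh (pi c); exists N; rewrite memPW. Qed.

End Pi.
Arguments PW {r Sig q} a N.

Lemma mem_window N (i : int) : (i \in window N) = (`|i| <= N)%N.
Proof.
apply/mapP/idP => [[k kin ->]|h]; first by rewrite mem_iota in kin; lia.
by exists (absz (i + N%:Z)%R); rewrite ?mem_iota; lia.
Qed.

Lemma uniq_window N : uniq (window N).
Proof. rewrite map_inj_uniq ?iota_uniq // => x y h; lia. Qed.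

Lemma prod_window_stable (R : realType) (G : int -> R[i]) N M :
  (forall i, (N < `|i|)%N -> G i = 1) -> (N <= M)%N ->
  \prod_(i <- window M) G i = \prod_(i <- window N) G i.
Proof.
move=> h1 hNM.
rewrite (bigID (fun i => (`|i| <= N)%N)) /= [X in _ * X]big1 ?mulr1; last first.
  by move=> i hi; apply: h1; lia.
rewrite -big_filter; apply: perm_big; apply: uniq_perm.
- by rewrite filter_uniq ?uniq_window.
- exact: uniq_window.
move=> i; rewrite mem_filter !mem_window.
by apply/andP/idP => [[]|h'] //; split => //; lia.
Qed.

Section Kern.
Variable R : realType.
Variable r : nat.
Variable Sig : 'I_r -> finType.
Variable q : State Sig.
Variable a : 'I_r -> int.
Variable Q : State Sig -> State Sig -> R[i].
Local Notation St := (State Sig).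
Local Notation CF := (Config q).

Definition Kw N (d c : CF) := \prod_(i <- window N) Q (cfg d i) (cfg (pi a c) i).
Definition K (d c : CF) := Kw (maxn (bnd d) (bnd (pi a c))) d c.

Lemma bnd_supp (c : CF) N : (bnd c <= N)%N -> supp q N (cfg c).
Proof. by move=> h; apply: (supp_mono h) => i; exact: bndP. Qed.

Lemma Kw_stable (Qqq : Q q q = 1) N M d c : (N <= M)%N ->
  supp q N (cfg d) -> supp q N (cfg (pi a c)) -> Kw M d c = Kw N d c.
Proof.
move=> hNM sd sc; apply: prod_window_stable => // i hi.
by rewrite sd // sc.
Qed.

Lemma K_Kw (Qqq : Q q q = 1) N d c :
  supp q N (cfg d) -> supp q N (cfg (pi a c)) -> K d c = Kw N d c.
Proof.
move=> sd sc; rewrite /K.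
set M0 := maxn _ _.
have s1 : supp q M0 (cfg d) by apply: bnd_supp; rewrite leq_maxl.
have s2 : supp q M0 (cfg (pi a c)) by apply: bnd_supp; rewrite leq_maxr.
rewrite -(@Kw_stable Qqq M0 (maxn N M0)) ?leq_maxr //.
by rewrite (@Kw_stable Qqq N (maxn N M0)) ?leq_maxl.
Qed.

Lemma K_Ucoef (Qqq : Q q q = 1) d c : Ucoef a Q d c (K d c).
Proof.
exists (maxn (bnd d) (bnd (pi a c))) => M' h; rewrite /K /Kw.
apply: prod_window_stable => // i hi.
rewrite /delta /delta_p /nbh /=.
have -> : [ffun j => cfg c (i + a j)%R j] = cfg (pi a c) i by [].
by rewrite !bndP //; lia.
Qed.

Lemma Ucoef_K (Qqq : Q q q = 1) d c z : Ucoef a Q d c z -> z = K d c.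
Proof.
case=> M hM; have [M1 hM1] := K_Ucoef Qqq d c.
by rewrite -(hM (maxn M M1)) ?leq_maxl // -(hM1 (maxn M M1)) ?leq_maxr.
Qed.

End Kern.

Lemma prod_window_ord (R : realType) N (G : int -> R[i]) :
  \prod_(i <- window N) G i = \prod_(k < N.*2.+1) G (k%:Z - N%:Z).
Proof.
rewrite /window big_map.
have -> : \prod_(k < N.*2.+1) G (k%:Z - N%:Z) = \prod_(0 <= k < N.*2.+1) G (k%:Z - N%:Z).
  by rewrite big_mkord.
by rewrite /index_iota subn0.
Qed.

Section Kern2.
Variable R : realType.
Variable r : nat.
Variable Sig : 'I_r -> finType.
Variable q : State Sig.
Variable a : 'I_r -> int.
Variable Q : State Sig -> State Sig -> R[i].
Local Notation St := (State Sig).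
Local Notation CF := (Config q).
Local Notation K := (@K R r Sig q a Q).

Variable Qqq : Q q q = 1.

Lemma K_ext N f g : K (ext N f) (piinv a (ext N g)) = \prod_(k < N.*2.+1) Q (f k) (g k).
Proof.
rewrite (K_Kw Qqq (N := N)); last by rewrite pi_inv; exact: ext_supp.
  rewrite /Kw prod_window_ord.
  by apply: eq_bigr => k _; rewrite pi_inv !ext_at.
exact: ext_supp.
Qed.

Lemma sum_SW N (F : CF -> R[i]) :
  \sum_(d <- SW N) F d = \sum_(f : {ffun 'I_(N.*2.+1) -> St}) F (ext N f).
Proof. by rewrite /SW big_map big_enum. Qed.

Lemma sum_PW N (F : CF -> R[i]) :
  \sum_(c <- PW a N) F c = \sum_(g : {ffun 'I_(N.*2.+1) -> St}) F (piinv a (ext N g)).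
Proof. by rewrite /PW /SW big_map big_map big_enum. Qed.

Lemma memSW_ex N (d : CF) : d \in SW N -> exists f, d = ext N f.
Proof. by case/mapP => f _ ->; exists f. Qed.

Lemma memPW_ex N (c : CF) : c \in PW a N -> exists g, c = piinv a (ext N g).
Proof. by case/mapP => x /memSW_ex [g ->] ->; exists g. Qed.

Lemma prod_eqR n (g g' : {ffun 'I_n -> St}) :
  \prod_(k < n) ((g k == g' k)%:R : R[i]) = (g == g')%:R.
Proof.
case: (boolP [forall k, g k == g' k]) => h.
  have -> : g = g' by apply/ffunP => k; apply/eqP; exact: (forallP h).
  by rewrite eqxx big1 // => k _; rewrite eqxx.
have [k hk] : exists k, g k != g' k.
  by move: h; rewrite negb_forall => /existsP.
rewrite (bigD1 k) //= (negbTE hk) mul0r; case: eqP => // e.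
by move: hk; rewrite e eqxx.
Qed.

Variable rowU : forall y y', \sum_x Q y x * (Q y' x)^* = (y == y')%:R.
Variable colU : forall x x', \sum_y (Q y x)^* * Q y x' = (x == x')%:R.

Lemma colK N (c c' : CF) : c \in PW a N -> c' \in PW a N ->
  \sum_(d <- SW N) (K d c)^* * K d c' = (c == c')%:R.
Proof.
move=> /memPW_ex [g ->] /memPW_ex [g' ->]; rewrite sum_SW.
under eq_bigr => f _ do rewrite !K_ext rmorph_prod -big_split /=.
rewrite -(bigA_distr_bigA (fun k y => (Q y (g k))^* * Q y (g' k))) /=.
under eq_bigr => k _ do rewrite colU.
rewrite prod_eqR; congr (_%:R).
case: (g =P g') => [->|ne]; first by rewrite eqxx.
case: eqP => // e; exfalso; apply: ne; apply: (ext_inj (N := N)).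
exact: (can_inj (pi_inv a)) e.
Qed.

Lemma rowK N (d d' : CF) : d \in SW N -> d' \in SW N ->
  \sum_(c <- PW a N) K d c * (K d' c)^* = (d == d')%:R.
Proof.
move=> /memSW_ex [f ->] /memSW_ex [f' ->]; rewrite sum_PW.
under eq_bigr => g _ do rewrite !K_ext rmorph_prod -big_split /=.
rewrite -(bigA_distr_bigA (fun k x => Q (f k) x * (Q (f' k) x)^*)) /=.
under eq_bigr => k _ do rewrite rowU.
rewrite prod_eqR; congr (_%:R).
case: (f =P f') => [->|ne]; first by rewrite eqxx.
case: eqP => // e; exfalso; apply: ne; exact: (ext_inj e).
Qed.

End Kern2.

Section Block.
Variable R : realType.
Variable r : nat.
Variable Sig : 'I_r -> finType.
Variable q : State Sig.
Variable a : 'I_r -> int.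
Variable Q : State Sig -> State Sig -> R[i].
Local Notation St := (State Sig).
Local Notation CF := (Config q).
Local Notation K := (@K R r Sig q a Q).

Variable Qq1 : forall x, Q q x = (x == q)%:R.
Variable Qq2 : forall y, Q y q = (y == q)%:R.

Lemma Qqq : Q q q = 1.
Proof. by rewrite Qq1 eqxx. Qed.

Lemma K_nz_eq (d c : CF) : K d c != 0 ->
  forall i, (cfg d i == q) = (cfg (pi a c) i == q).
Proof.
rewrite /K /Kw; set M0 := maxn _ _ => hnz i.
case: (leqP `|i| M0) => hi.
  move: hnz; rewrite (big_rem i) ?mem_window // mulf_eq0 negb_or => /andP[h _].
  case e1: (cfg d i == q).
    by move: h; rewrite (eqP e1) Qq1; case: (_ == q); rewrite ?eqxx.
  case e2: (cfg (pi a c) i == q) => //.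
  by move: h; rewrite (eqP e2) Qq2 e1 eqxx.
have s1 : supp q M0 (cfg d) by apply: bnd_supp; rewrite leq_maxl.
have s2 : supp q M0 (cfg (pi a c)) by apply: bnd_supp; rewrite leq_maxr.
by rewrite s1 // s2 // eqxx.
Qed.

Lemma K_supp (d c : CF) N : K d c != 0 ->
  supp q N (cfg d) <-> supp q N (cfg (pi a c)).
Proof.
move=> h; split=> hs i hi; apply/eqP.
  by rewrite -(K_nz_eq h) hs.
by rewrite (K_nz_eq h) hs.
Qed.

Lemma K_out1 N (d c : CF) : d \in SW N -> c \notin PW a N -> K d c = 0.
Proof.
move=> dS cP; apply/eqP; apply/negPn/negP => h; move/negP: cP; apply.
rewrite memPW; apply: memSW2; apply/(K_supp _ h); exact: memSW1.
Qed.

Lemma K_out2 N (d c : CF) : c \in PW a N -> d \notin SW N -> K d c = 0.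
Proof.
move=> cP dS; apply/eqP; apply/negPn/negP => h; move/negP: dS; apply.
apply: memSW2; apply/(K_supp _ h); rewrite memPW in cP; exact: memSW1.
Qed.

End Block.


Section Mx.
Variable R : realType.
Variable r : nat.
Variable Sig : 'I_r -> finType.
Variable Q : State Sig -> State Sig -> R[i].
Local Notation St := (State Sig).

Lemma sum_enum (F : St -> R[i]) : \sum_(j < #|St|) F (enum_val j) = \sum_x F x.
Proof.
rewrite (reindex (fun j : 'I_#|St| => enum_val j)) //=; exact: onW_bij (enum_val_bij St).
Qed.

Lemma unit_rows : Qmx Q \is unitarymx ->
  forall y y', \sum_x Q y x * (Q y' x)^* = (y == y')%:R.
Proof.
move/unitarymxP => /matrixP H y y'; have := H (enum_rank y) (enum_rank y').
rewrite !mxE (inj_eq enum_rank_inj) => <-.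
rewrite -sum_enum; apply: eq_bigr => j _; by rewrite /Qmx !mxE !enum_rankK.
Qed.

Lemma unit_cols : Qmx Q \is unitarymx ->
  forall x x', \sum_y (Q y x)^* * Q y x' = (x == x')%:R.
Proof.
rewrite -trmxC_unitary => /unitarymxP /matrixP H x x'.
have := H (enum_rank x) (enum_rank x').
rewrite !mxE (inj_eq enum_rank_inj) => <-.
rewrite -sum_enum; apply: eq_bigr => j _; by rewrite /Qmx !mxE conjCK !enum_rankK.
Qed.

Lemma cols_unit : (forall x x', \sum_y (Q y x)^* * Q y x' = (x == x')%:R) ->
  Qmx Q \is unitarymx.
Proof.
move=> H; rewrite -trmxC_unitary; apply/unitarymxP/matrixP => i k.
rewrite !mxE.
rewrite -(inj_eq enum_val_inj) -H -sum_enum; apply: eq_bigr => j _.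
by rewrite /Qmx !mxE conjCK.
Qed.

End Mx.

Section Main.
Variable R : realType.
Variable r : nat.
Variable Sig : 'I_r -> finType.
Variable a : 'I_r -> int.
Variable q : State Sig.
Variable Q : State Sig -> State Sig -> R[i].
Local Notation St := (State Sig).
Local Notation CF := (Config q).
Local Notation C := R[i].
Local Notation K := (@K R r Sig q a Q).

Lemma plqca_q2 : is_PLQCA a q Q -> forall y, Q y q = (y == q)%:R.
Proof.
case=> _ [_ h] y; rewrite -h /delta /delta_p; congr (Q y _).
by apply/ffunP => j; rewrite ffunE.
Qed.

Lemma q1_of_rows (Qq2 : forall y, Q y q = (y == q)%:R)
  (rowU : forall y y', \sum_x Q y x * (Q y' x)^* = (y == y')%:R) x :
  Q q x = (x == q)%:R.
Proof.
have := rowU q q; rewrite eqxx (bigD1 q) //= Qq2 eqxx conjC1 mulr1.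
rewrite -[X in _ = X]addr0 => /addrI H0.
case: (eqVneq x q) => [->|nx]; first by rewrite Qq2 eqxx.
have := psumr_eq0P (fun i _ => mul_conjC_ge0 (Q q i)) H0 nx.
by move/eqP; rewrite mul_conjC_eq0 => /eqP ->.
Qed.

Lemma in_SW_bnd (d : CF) : d \in SW (bnd d).
Proof. by apply: memSW2 => i h; exact: bndP. Qed.

Lemma in_PW_bnd (c : CF) : c \in PW a (bnd (pi a c)).
Proof. by rewrite memPW; exact: in_SW_bnd. Qed.

Section Unit.
Variable Qq1 : forall x, Q q x = (x == q)%:R.
Variable Qq2 : forall y, Q y q = (y == q)%:R.
Variable rowU : forall y y', \sum_x Q y x * (Q y' x)^* = (y == y')%:R.
Variable colU : forall x x', \sum_y (Q y x)^* * Q y x' = (x == x')%:R.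

Let Q1 : Q q q = 1 := Qqq Qq1.

Lemma sumwin (w : CF -> C) (d : CF) N M : d \in SW N -> d \in SW M ->
  \sum_(c <- PW a N) K d c * w c = \sum_(c <- PW a M) K d c * w c.
Proof.
move=> dN dM; apply: (HasSum_uniq (f := fun c => K d c * w c)); apply: HasSum_fin;
  rewrite ?PW_uniq // => c cn; by rewrite (K_out1 Qq1 Qq2 _ cn) ?mul0r.
Qed.

Lemma sumwin2 (w : CF -> C) (c : CF) N M : c \in PW a N -> c \in PW a M ->
  \sum_(d <- SW N) (K d c)^* * w d = \sum_(d <- SW M) (K d c)^* * w d.
Proof.
move=> cN cM; apply: (HasSum_uniq (f := fun d => (K d c)^* * w d)); apply: HasSum_fin;
  rewrite ?SW_uniq // => d dn; by rewrite (K_out2 Qq1 Qq2 _ dn) ?conjC0 ?mul0r.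
Qed.

Lemma colK' N (c c' : CF) : c \in PW a N -> c' \in PW a N ->
  \sum_(d <- SW N) K d c * (K d c')^* = (c == c')%:R.
Proof.
move=> cP c'P; have := colK Q1 colU cP c'P.
move/(f_equal (fun z : C => z^*)); rewrite rmorph_sum conjC_nat => <-.
by apply: eq_bigr => d _; rewrite rmorphM /= conjCK.
Qed.

Lemma rowK' N (d d' : CF) : d \in SW N -> d' \in SW N ->
  \sum_(c <- PW a N) (K d c)^* * ((K d' c)^*)^* = (d == d')%:R.
Proof.
move=> dS d'S; have := rowK a Q1 rowU dS d'S.
move/(f_equal (fun z : C => z^*)); rewrite rmorph_sum conjC_nat => <-.
by apply: eq_bigr => c _; rewrite rmorphM.
Qed.

Lemma sqn_ge0 (x : C) : 0 <= `|x| ^+ 2.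
Proof. by rewrite exprn_ge0. Qed.

Lemma unit_wf : well_formed a q Q.
Proof.
move=> u s hu.
pose v d := \sum_(c <- PW a (bnd d)) K d c * u c.
exists v; split.
  move=> d; exists (K d); split; first by move=> c; exact: K_Ucoef.
  apply: HasSum_fin; first exact: PW_uniq.
  by move=> c cn; rewrite (K_out1 Qq1 Qq2 (in_SW_bnd d) cn) mul0r.
apply: (HasSum_windows (A := SW) (B := PW a) _ _ _ _ _ _ _ _ _ hu).
- by move=> d; exact: sqn_ge0.
- by move=> c; exact: sqn_ge0.
- exact: SW_uniq.
- exact: PW_uniq.
- exact: SW_mono.
- exact: PW_mono.
- exact: SW_exh.
- exact: PW_exh.
move=> N.
rewrite (eq_big_seq (fun d => `|\sum_(c <- PW a N) K d c * u c| ^+ 2)); last first.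
  by move=> d dS; rewrite /v (sumwin _ (in_SW_bnd d) dS).
apply: iso_fin; [exact: SW_uniq | exact: PW_uniq | exact: colK'].
Qed.

Lemma Uapp_eq (u v : CF -> C) : Uapp a Q u v -> forall d N, d \in SW N ->
  v d = \sum_(c <- PW a N) K d c * u c.
Proof.
move=> hU d N dS; have [w [hw hs]] := hU d.
apply: (HasSum_uniq hs); apply: (HasSum_ext (f := fun c => K d c * u c)).
  by move=> c; rewrite (Ucoef_K Q1 (hw c)).
apply: HasSum_fin; first exact: PW_uniq.
by move=> c cn; rewrite (K_out1 Qq1 Qq2 dS cn) mul0r.
Qed.

Lemma unit_inj (u1 u2 v : CF -> C) : Uapp a Q u1 v -> Uapp a Q u2 v -> u1 = u2.
Proof.
move=> h1 h2; apply: functional_extensionality => c0.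
set N := bnd (pi a c0); have c0P : c0 \in PW a N := in_PW_bnd c0.
have key : forall u, Uapp a Q u v -> u c0 = \sum_(d <- SW N) (K d c0)^* * v d.
  move=> u hu.
  rewrite (eq_big_seq (fun d => (K d c0)^* * \sum_(c <- PW a N) K d c * u c)); last first.
    by move=> d dS; rewrite (Uapp_eq hu dS).
  rewrite (inv_fin (L := fun c d => (K d c)^*) (M := fun d c => K d c)) //.
    exact: PW_uniq.
  by move=> c c' cP c'P; exact: colK.
by rewrite (key _ h1) (key _ h2).
Qed.

Lemma unit_surj (v : CF -> C) : in_l2 v -> exists u, in_l2 u /\ Uapp a Q u v.
Proof.
case=> s hs.
pose u c := \sum_(d <- SW (bnd (pi a c))) (K d c)^* * v d.
have uwin : forall c N, c \in PW a N -> u c = \sum_(d <- SW N) (K d c)^* * v d.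
  by move=> c N cN; rewrite /u (sumwin2 _ (in_PW_bnd c) cN).
exists u; split.
  exists s; apply: (HasSum_windows (A := PW a) (B := SW) _ _ _ _ _ _ _ _ _ hs).
  - by move=> d; exact: sqn_ge0.
  - by move=> c; exact: sqn_ge0.
  - exact: PW_uniq.
  - exact: SW_uniq.
  - exact: PW_mono.
  - exact: SW_mono.
  - exact: PW_exh.
  - exact: SW_exh.
  move=> N.
  rewrite (eq_big_seq (fun c => `|\sum_(d <- SW N) (K d c)^* * v d| ^+ 2)); last first.
    by move=> c cP; rewrite (uwin c N cP).
  apply: (iso_fin (K := fun c d => (K d c)^*)); [exact: PW_uniq | exact: SW_uniq | exact: rowK'].
move=> d; exists (K d); split; first by move=> c; exact: K_Ucoef.
set N := bnd d.
have := HasSum_fin (f := fun c => K d c * u c) (@PW_uniq r Sig q a N)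
  (fun c cn => ltac:(by rewrite /= (K_out1 Qq1 Qq2 (in_SW_bnd d) cn) mul0r)).
suff -> : \sum_(c <- PW a N) K d c * u c = v d by [].
rewrite (eq_big_seq (fun c => K d c * \sum_(d' <- SW N) (K d' c)^* * v d')); last first.
  by move=> c cP; rewrite (uwin c N cP).
apply: (inv_fin (L := fun d c => K d c) (M := fun c d' => (K d' c)^*)).
- exact: SW_uniq.
- by move=> x x' xS x'S; exact: rowK.
- exact: in_SW_bnd.
Qed.

End Unit.

End Main.

Section WF.
Variable R : realType.
Variable r : nat.
Variable Sig : 'I_r -> finType.
Variable a : 'I_r -> int.
Variable q : State Sig.
Variable Q : State Sig -> State Sig -> R[i].
Local Notation St := (State Sig).
Local Notation CF := (Config q).
Local Notation C := R[i].
Local Notation K := (@K R r Sig q a Q).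

Variable Qq2 : forall y, Q y q = (y == q)%:R.
Let Q1 : Q q q = 1. Proof. by rewrite Qq2 eqxx. Qed.

Definition e (y : St) : CF := ext 0 [ffun _ : 'I_(0.*2.+1) => y].
Definition cx (x : St) : CF := piinv a (e x).
Definition E0 : seq CF := map e (enum St).

Lemma e_inj : injective e.
Proof. by move=> y y' /ext_inj /ffunP /(_ ord0); rewrite !ffunE. Qed.

Lemma cx_inj : injective cx.
Proof. move=> x x' h; apply: e_inj; exact: (can_inj (pi_inv a)) h. Qed.

Lemma E0_uniq : uniq E0.
Proof. rewrite map_inj_uniq ?enum_uniq //; exact: e_inj. Qed.

Lemma K_e y x : K (e y) (cx x) = Q y x.
Proof. by rewrite /e /cx (K_ext a Q1) big_ord1 !ffunE. Qed.

Lemma K_E0 (d : CF) x : d \notin E0 -> K d (cx x) = 0.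
Proof.
move=> dn.
have ns : ~ supp q 0 (cfg d).
  move=> hs; move/negP: dn; apply; apply/mapP; exists (cfg d 0); first by rewrite mem_enum.
  apply: cfg_inj; apply: functional_extensionality => i /=; rewrite /extf.
  case: ifP => hi; last by rewrite hs //; lia.
  have -> : i = 0 by lia.
  by rewrite ffunE.
have [i [hi di]] : exists i, (0 < `|i|)%N /\ cfg d i != q.
  case: (Classical_Prop.classic (exists i, (0 < `|i|)%N /\ cfg d i != q)) => // hn.
  exfalso; apply: ns => i hi; apply/eqP; apply/negPn/negP => di; apply: hn.
  by exists i; split.
set M := maxn (bnd d) `|i|%N.
rewrite (K_Kw Q1 (N := M)); first last.
- rewrite /cx pi_inv; apply: (supp_mono (N := 0)) => //; exact: ext_supp.
- by apply: bnd_supp; rewrite leq_maxl.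
rewrite /Kw (big_rem i) ?mem_window ?leq_maxr //.
rewrite /cx pi_inv.
have -> : cfg (e x) i = q by rewrite ext_supp.
by rewrite Qq2 (negbTE di) /= mul0r.
Qed.

Variable hwf : well_formed a q Q.

Lemma wf_fin (L : seq CF) (b : CF -> C) : uniq L ->
  (forall c, c \notin L -> b c = 0) ->
  (forall c d, c \in L -> d \notin E0 -> K d c = 0) ->
  \sum_(d <- E0) `|\sum_(c <- L) K d c * b c| ^+ 2 = \sum_(c <- L) `|b c| ^+ 2.
Proof.
move=> uL b0 hL.
have hu : l2norm2 b (\sum_(c <- L) `|b c| ^+ 2).
  apply: HasSum_fin uL _ => c cn; by rewrite b0 // normr0 expr0n.
have [v [hUv hv]] := hwf hu.
have ev : forall d, v d = \sum_(c <- L) K d c * b c.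
  move=> d; have [w [hw hs]] := hUv d; apply: (HasSum_uniq hs).
  apply: (HasSum_ext (f := fun c => K d c * b c)).
    by move=> c; rewrite (Ucoef_K Q1 (hw c)).
  by apply: HasSum_fin uL _ => c cn; rewrite b0 // mulr0.
apply: (HasSum_uniq _ hv).
apply: (HasSum_ext (f := fun d => `|\sum_(c <- L) K d c * b c| ^+ 2)).
  by move=> d; rewrite ev.
apply: HasSum_fin; first exact: E0_uniq.
move=> d dn; rewrite big1_seq ?normr0 ?expr0n // => c /andP[_ cL].
by rewrite (hL c d cL dn) mul0r.
Qed.

Lemma sum_E0 (F : CF -> C) : \sum_(d <- E0) F d = \sum_y F (e y).
Proof. by rewrite /E0 big_map big_enum. Qed.

Lemma cxL (L : seq St) c d : c \in map cx L -> d \notin E0 -> K d c = 0.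
Proof. by case/mapP => x _ -> dn; exact: K_E0. Qed.

Lemma wf_norm x : \sum_y (Q y x)^* * Q y x = 1.
Proof.
have := @wf_fin [:: cx x] (fun c => (c == cx x)%:R) isT.
rewrite !big_cons !big_nil !addr0 eqxx normr1 expr1n sum_E0 => <-.
- by apply: eq_bigr => y _; rewrite big_cons big_nil addr0 eqxx mulr1 K_e normCKC.
- by move=> c; rewrite inE => /negbTE ->.
- by move=> c d cL; apply: (cxL (L := [:: x])).
Qed.

Lemma wf_orth x x' (al : C) : x != x' ->
  \sum_y `|Q y x * 1 + Q y x' * al| ^+ 2 = 1 + `|al| ^+ 2.
Proof.
move=> nx.
have nc : cx x' != cx x by apply/negP => /eqP /cx_inj /eqP; rewrite eq_sym (negbTE nx).
have uL : uniq [:: cx x; cx x'] by rewrite /= inE eq_sym nc.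
have nc' : (cx x == cx x') = false by rewrite eq_sym (negbTE nc).
have := @wf_fin [:: cx x; cx x'] (fun c => (c == cx x)%:R + al * (c == cx x')%:R) uL.
rewrite big_cons big_cons big_nil addr0 eqxx nc' (negbTE nc) eqxx.
rewrite mulr0 mulr1 addr0 add0r normr1 expr1n sum_E0 => <-.
- apply: eq_bigr => y _; rewrite big_cons big_cons big_nil addr0 !K_e.
  by rewrite eqxx nc' (negbTE nc) eqxx [true%:R]/(1%:R) [false%:R]/(0%:R); congr (_ ^+ 2); congr (`|_|); ring.
- move=> c; rewrite !inE negb_or => /andP[/negbTE -> /negbTE ->].
  by rewrite mulr0 addr0.
- by move=> c d cL; apply: (cxL (L := [:: x; x'])).
Qed.

Lemma expand (A B : St -> C) (al : C) :
  \sum_y `|A y * 1 + B y * al| ^+ 2 =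
  \sum_y A y * (A y)^* + al^* * \sum_y A y * (B y)^* + al * \sum_y (A y)^* * B y
  + al * al^* * \sum_y B y * (B y)^*.
Proof.
rewrite !big_distrr -!big_split; apply: eq_bigr => y _ /=.
rewrite normCK rmorphD !rmorphM /= conjC1; ring.
Qed.

Lemma wf_cols x x' : \sum_y (Q y x)^* * Q y x' = (x == x')%:R.
Proof.
case: (eqVneq x x') => [<-|nx]; first by rewrite wf_norm ?eqxx.
set p := \sum_y (Q y x)^* * Q y x'.
have nA : \sum_y Q y x * (Q y x)^* = 1.
  by rewrite -(wf_norm x); apply: eq_bigr => y _; rewrite mulrC.
have nB : \sum_y Q y x' * (Q y x')^* = 1.
  by rewrite -(wf_norm x'); apply: eq_bigr => y _; rewrite mulrC.
have pc : \sum_y Q y x * (Q y x')^* = p^*.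
  by rewrite /p rmorph_sum; apply: eq_bigr => y _; rewrite rmorphM /= conjCK mulrC.
have E al : al^* * p^* + al * p = 0.
  have := wf_orth al nx; rewrite (expand (fun y => Q y x) (fun y => Q y x')) /=.
  rewrite nA nB pc -/p normCK => h.
  have := congr1 (fun z => z - (1 + al * al^*)) h; rewrite subrr => <-; ring.
have E1 := E 1; have Ei := E 'i.
rewrite conjC1 !mul1r in E1.
rewrite conjCi in Ei.
have pr : p^* = p.
  have : 'i * (p - p^*) = 0 by rewrite -Ei; ring.
  by move/eqP; rewrite mulf_eq0 (negbTE (neq0Ci _)) /= subr_eq0 => /eqP.
have : 2%:R * p = 0 by rewrite -E1 pr; ring.
by move/eqP; rewrite mulf_eq0 pnatr_eq0 /= => /eqP ->.
Qed.

End WF.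


Theorem theorem6 (R : realType) (r : nat) (Sig : 'I_r -> finType)
    (a : 'I_r -> int) (q : State Sig) (Q : State Sig -> State Sig -> R[i]) :
  is_PLQCA a q Q ->
  (Qmx Q \is unitarymx <-> well_formed a q Q) /\
  (well_formed a q Q <-> U_unitary a q Q).
Proof.
move=> H; have Qq2 := plqca_q2 H.
have U2all : Qmx Q \is unitarymx -> well_formed a q Q /\ U_unitary a q Q.
  move=> hu; have rowU := unit_rows hu; have colU := unit_cols hu.
  have Qq1 := q1_of_rows Qq2 rowU.
  have wf := unit_wf a Qq1 Qq2 colU.
  split=> //; split=> //; split.
  - move=> u1 u2 v _ _; exact: (unit_inj Qq1 Qq2 colU).
  - move=> v hv; exact: (unit_surj a Qq1 Qq2 rowU hv).
have W2U : well_formed a q Q -> Qmx Q \is unitarymx.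
  move=> hwf; apply: cols_unit => x x'; exact: (wf_cols Qq2 hwf).
split; split.
- by move/U2all => [].
- exact: W2U.
- by move/W2U/U2all => [].
- by case.
Qed.
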